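(* Let $\boldsymbol{\mu}=(\mu_s)_{s\ge1}$ be a fixed probability distribution on $\{1,2,\dots\}$ with $\mu_1>0$ and $\sum_{s=1}^\infty s\mu_s<\infty$, for each $n$ let $\Pi_n\sim ESC_{[n]}(\boldsymbol{\mu})$, and let $M_n$ be the size of the largest cluster of $\Pi_n$. Then $M_n/n\xrightarrow{p}0$ as $n\to\infty$.
   Context: For a fixed distribution $\boldsymbol{\mu}$ on the positive integers with $\mu_1>0$, $ESC_{[n]}(\boldsymbol{\mu})$ is the law of the following random partition of $[n]=\{1,\dots,n\}$: let $S_1,S_2,\dots$ be i.i.d. with law $\boldsymbol{\mu}$, condition on the event $E_n$ that $\sum_{j=1}^k S_j=n$ for some $k\in\mathbb{N}$, let $K$ be that unique $k$, and let $(z_1,\dots,z_n)$ be a uniformly random permutation of the vector with $S_1$ copies of $1$, ..., $S_K$ copies of $K$; the partition has blocks $\{i:z_i=j\}$, $j=1,\dots,K$ (so it has $K$ clusters of sizes $S_1,\dots,S_K$). $\xrightarrow{p}$ denotes convergence in probability. *)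

(* Defs.v *)
From HB Require Import structures.
From mathcomp Require Import all_boot all_order all_algebra.
From mathcomp Require Import all_classical all_reals all_analysis.
Set Implicit Arguments. Unset Strict Implicit. Unset Printing Implicit Defensive.
Import Order.TTheory GRing.Theory Num.Theory.
Local Open Scope ring_scope.

(* A sequence (S_1,...,S_k) of cluster sizes, each part stored in 'I_n.+1. *)
Definition is_comp (n k : nat) (s : {ffun 'I_k -> 'I_n.+1}) : bool :=
  [forall i, (0 < s i)%N] && ((\sum_(i < k) (s i : nat))%N == n).

(* P(S_1 = s_1, ..., S_k = s_k) for i.i.d. S_j ~ mu. *)
Definition comp_weight (R : realType) (mu : nat -> R) (n k : nat)
  (s : {ffun 'I_k -> 'I_n.+1}) : R := \prod_(i < k) mu (s i).

Definition arrangements (n k : nat) (s : {ffun 'I_k -> 'I_n.+1})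
  : {set {ffun 'I_n -> 'I_k}} :=
  [set z : {ffun 'I_n -> 'I_k} | [forall j, #|[set i | z i == j]| == s j]].

Definition cluster_partition (n k : nat) (z : {ffun 'I_n -> 'I_k})
  : {set {set 'I_n}} := [set [set i | z i == j] | j : 'I_k].

Definition max_block (n : nat) (P : {set {set 'I_n}}) : nat :=
  (\max_(B in P) #|B|)%N.

(* P(E_n): some partial sum equals n (events over k are disjoint). *)
Definition prob_E (R : realType) (mu : nat -> R) (n : nat) : R :=
  \sum_(k < n.+1) \sum_(s : {ffun 'I_k -> 'I_n.+1} | is_comp s)
     comp_weight mu s.

Definition esc_prob (R : realType) (mu : nat -> R) (n : nat)
  (Ev : {set {set 'I_n}} -> bool) : R :=
  (\sum_(k < n.+1) \sum_(s : {ffun 'I_k -> 'I_n.+1} | is_comp s)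
     comp_weight mu s *
     (#|[set z in arrangements s | Ev (cluster_partition z)]|%:R
       / #|arrangements s|%:R)) / prob_E mu n.
Arguments esc_prob {R} mu n Ev.

(* Main.v *)
Require Import Defs.
From HB Require Import structures.
From mathcomp Require Import all_boot all_order all_algebra.
From mathcomp Require Import all_classical all_reals all_analysis.
From mathcomp Require Import zify ring lra.
Import Order.TTheory GRing.Theory Num.Theory.
Import numFieldNormedType.Exports.
Local Open Scope classical_set_scope.
Local Open Scope ring_scope.
Set Implicit Arguments. Unset Strict Implicit.

Fixpoint sumC (R : realType) (n k : nat) (Phi : seq nat -> R) : R :=
  match k with
  | 0 => if n == 0%N then Phi [::] else 0
  | k'.+1 => \sum_(t < n) sumC (n - t.+1) k' (fun l => Phi (t.+1 :: l))
  end.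

Definition lst k B (s : {ffun 'I_k -> 'I_B}) : seq nat := [seq val (s i) | i <- enum 'I_k].

Definition cons_ffun (T : Type) k (x : T) (g : {ffun 'I_k -> T}) : {ffun 'I_k.+1 -> T} :=
  [ffun i => if unlift ord0 i is Some j then g j else x].

Lemma cons_ffun0 (T : Type) k (x : T) g : @cons_ffun T k x g ord0 = x.
Proof. by rewrite ffunE unlift_none. Qed.

Lemma cons_ffunS (T : Type) k (x : T) g j : @cons_ffun T k x g (lift ord0 j) = g j.
Proof. by rewrite ffunE liftK. Qed.

Lemma big_ffunS (R : realType) (T : finType) k (F : {ffun 'I_k.+1 -> T} -> R) :
  \sum_f F f = \sum_(x : T) \sum_(g : {ffun 'I_k -> T}) F (cons_ffun x g).
Proof.
rewrite pair_big /=.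
rewrite (reindex (fun p : T * {ffun 'I_k -> T} => cons_ffun p.1 p.2)) //=.
exists (fun f => (f ord0, [ffun j => f (lift ord0 j)])) => [[x g] _|f _] /=.
  rewrite cons_ffun0; congr pair; apply/ffunP => j; by rewrite ffunE cons_ffunS.
apply/ffunP => i; rewrite ffunE; case: unliftP => [j ->|->] //; by rewrite ffunE.
Qed.

Lemma lst_cons k B (x : 'I_B) (g : {ffun 'I_k -> 'I_B}) :
  lst (cons_ffun x g) = val x :: lst g.
Proof.
rewrite /lst enum_ordSl /= cons_ffun0 -map_comp; congr cons.
by apply: eq_map => j /=; rewrite cons_ffunS.
Qed.

Lemma sumC_ext (R : realType) n k (Phi1 Phi2 : seq nat -> R) :
  (forall l, Phi1 l = Phi2 l) -> sumC n k Phi1 = sumC n k Phi2.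
Proof.
elim: k n Phi1 Phi2 => [|k IH] n Phi1 Phi2 H /=; first by rewrite H.
by apply: eq_bigr => t _; apply: IH.
Qed.

Lemma sumC_add (R : realType) n k (Phi1 Phi2 : seq nat -> R) :
  sumC n k (fun l => Phi1 l + Phi2 l) = sumC n k Phi1 + sumC n k Phi2.
Proof.
elim: k n Phi1 Phi2 => [|k IH] n Phi1 Phi2 /=; first by case: eqP; rewrite ?addr0.
by rewrite -big_split /=; apply: eq_bigr => t _; apply: IH.
Qed.

Lemma sumC_scale (R : realType) n k c (Phi : seq nat -> R) :
  sumC n k (fun l => c * Phi l) = c * sumC n k Phi.
Proof.
elim: k n Phi => [|k IH] n Phi /=; first by case: eqP; rewrite ?mulr0.
by rewrite mulr_sumr; apply: eq_bigr => t _; apply: IH.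
Qed.

Lemma sumC_ge0 (R : realType) n k (Phi : seq nat -> R) :
  (forall l, 0 <= Phi l) -> 0 <= sumC n k Phi.
Proof.
elim: k n Phi => [|k IH] n Phi H /=; first by case: eqP.
by apply: sumr_ge0 => t _; apply: IH.
Qed.

Lemma sumC_big (R : realType) n k (Phi : seq nat -> R) :
  (n < k)%N -> sumC n k Phi = 0.
Proof.
elim: k n Phi => [|k IH] n Phi //= H.
apply: big1 => t _; apply: IH.
have := ltn_ord t; move: H; clear; lia.
Qed.

Lemma bridge (R : realType) B n k (Phi : seq nat -> R) : (n < B)%N ->
  \sum_(s : {ffun 'I_k -> 'I_B} | [forall i, (0 < s i)%N] &&
        ((\sum_(i < k) (s i : nat))%N == n)) Phi (lst s) = sumC n k Phi.
Proof.
elim: k n Phi => [|k IH] n Phi nB.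
  rewrite /=. have lst0 : forall s : {ffun 'I_0 -> 'I_B}, lst s = [::].
    by move=> s; rewrite /lst enum_ord0.
  case: eqP => [->|nn].
    rewrite (eq_bigl (fun _ => true)); last first.
      by move=> s; rewrite big_ord0 eqxx andbT; apply/forallP => -[].
    rewrite (eq_bigr (fun _ => Phi [::])); last by move=> s _; rewrite lst0.
    by rewrite sumr_const card_ffun !card_ord expn0.
  rewrite big_pred0 // => s; rewrite big_ord0; apply/negbTE/negP => /andP[_ /eqP].
  by move=> h; apply: nn.
rewrite big_mkcond big_ffunS /=.
have E2 : forall x : 'I_B, \sum_(g : {ffun 'I_k -> 'I_B})
   (if [forall i, (0 < cons_ffun x g i)%N] &&
       ((\sum_(i < k.+1) (cons_ffun x g i : nat))%N == n)
    then Phi (lst (cons_ffun x g)) else 0) =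
   if (0 < x)%N && (x <= n)%N then sumC (n - x) k (fun l => Phi (val x :: l)) else 0.
  move=> x.
  have E : forall g : {ffun 'I_k -> 'I_B},
    ([forall i, (0 < cons_ffun x g i)%N] &&
       ((\sum_(i < k.+1) (cons_ffun x g i : nat))%N == n)) =
    ((0 < x)%N && (x <= n)%N) && ([forall i, (0 < g i)%N] && ((\sum_(i < k) (g i : nat))%N == n - x)%N).
    move=> g; rewrite big_ord_recl cons_ffun0.
    under eq_bigr do rewrite cons_ffunS.
    have -> : [forall i, (0 < cons_ffun x g i)%N] = (0 < x)%N && [forall i, (0 < g i)%N].
      apply/forallP/andP => [H|[H1 /forallP H2] i].
        split; first by have := H ord0; rewrite cons_ffun0.
        by apply/forallP => j; have := H (lift ord0 j); rewrite cons_ffunS.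
      by case: (unliftP ord0 i) => [j ->|->]; rewrite ?cons_ffunS ?cons_ffun0.
    set S := (\sum_(i < k) (g i : nat))%N.
    case: (0 < x)%N; case: [forall i, (0 < g i)%N] => //=; rewrite ?andbF //.
    apply/eqP/andP => [<-|[H /eqP ->]]; last by rewrite subnKC.
    by rewrite leq_addr addKn.
  under eq_bigr do rewrite E lst_cons.
  case: ifP => _; last by apply: big1.
  rewrite -big_mkcond /=; apply: IH.
  move: nB; clear; lia.
rewrite (eq_bigr _ (fun x _ => E2 x)).
clear E2 IH; case: B nB => // B nB.
rewrite big_ord_recl /= add0r.
rewrite (eq_bigr (fun i : 'I_B => if (i < n)%N then sumC (n - i.+1) k (fun l => Phi (i.+1 :: l)) else 0)); last first.
  by move=> i _ /=; rewrite /bump leq0n add1n.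
rewrite -big_mkcond /= big_ord_narrow //.
Qed.

Definition Wl (R : realType) (mu : nat -> R) (l : seq nat) : R := \prod_(x <- l) mu x.

Lemma weight_lst (R : realType) (mu : nat -> R) n k (s : {ffun 'I_k -> 'I_n.+1}) :
  comp_weight mu s = Wl mu (lst s).
Proof. by rewrite /comp_weight /Wl /lst big_map big_enum. Qed.

Lemma probE_eq (R : realType) (mu : nat -> R) n :
  prob_E mu n = \sum_(k < n.+1) sumC n k (Wl mu).
Proof.
apply: eq_bigr => k _; rewrite -(@bridge R n.+1) //.
by apply: eq_bigr => s _; rewrite weight_lst.
Qed.

Lemma Wl_ge0 (R : realType) (mu : nat -> R) l : (forall s, 0 <= mu s) -> 0 <= Wl mu l.
Proof. by move=> H; apply: prodr_ge0. Qed.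

Lemma ratio_le (R : realType) (eps : R) n k (s : {ffun 'I_k -> 'I_n.+1}) : 0 < eps ->
  #|[set z in arrangements s | (fun P => eps < (max_block P)%:R / n%:R)
        (cluster_partition z)]|%:R / #|arrangements s|%:R
  <= (count (fun t : nat => eps * n%:R < t%:R) (lst s))%:R :> R.
Proof.
move=> eps0.
set S := [set z in _ | _].
set P := (fun t : nat => eps * n%:R < t%:R).
case: (boolP (has P (lst s))) => Hh.
  have c1 : (0 < count P (lst s))%N by rewrite -has_count.
  apply: (@le_trans _ _ 1); last by rewrite ler1n.
  have SA : (#|S| <= #|arrangements s|)%N.
    by apply: subset_leq_card; apply/fintype.subsetP => z; rewrite inE => /andP[].
  case: (posnP #|arrangements s|) => [->|A0]; first by rewrite invr0 mulr0.
  by rewrite ler_pdivrMr ?ltr0n // mul1r ler_nat.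
have -> : S = finset.set0.
  apply/finset.setP => z; rewrite !inE; apply/negbTE/negP => /andP[zA].
  apply/negP; rewrite -leNgt.
  have Hmax : ((max_block (cluster_partition z))%:R <= eps * n%:R :> R).
    rewrite /max_block.
    apply: (big_ind (fun m : nat => (m%:R <= eps * n%:R :> R))).
    - by rewrite mulr_ge0 // ltW.
    - by move=> x y hx hy; rewrite /maxn; case: ifP.
    move=> B /imsetP[j _ ->].
    move: zA => /forallP /(_ j) /eqP ->.
    move/hasPn: Hh => /(_ (val (s j))); rewrite leNgt; apply.
    by rewrite /lst; apply: (map_f (fun i => val (s i))); rewrite mem_enum.
  case: (posnP n) => [n0|n0]; first by rewrite [X in _ / X%:R]n0 invr0 mulr0 ltW.
  by rewrite ler_pdivrMr ?ltr0n.
by rewrite cards0 mul0r.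
Qed.

Lemma esc_le (R : realType) (mu : nat -> R) (eps : R) n :
  (forall s, 0 <= mu s) -> 0 < eps ->
  esc_prob mu n (fun P => eps < (max_block P)%:R / n%:R) <=
  (\sum_(k < n.+1) sumC n k (fun l => Wl mu l * (count (fun t : nat => eps * n%:R < t%:R) l)%:R))
    / prob_E mu n.
Proof.
move=> mu0 eps0.
rewrite /esc_prob; apply: ler_wpM2r.
  by rewrite invr_ge0 probE_eq; apply: sumr_ge0 => k _; apply: sumC_ge0 => l; apply: Wl_ge0.
apply: ler_sum => k _; rewrite -(@bridge R n.+1) //; apply: ler_sum => s _.
rewrite weight_lst; apply: ler_wpM2l; first exact: Wl_ge0.
exact: ratio_le.
Qed.

Lemma sum_trunc (R : realType) (F : nat -> R) m N : (m <= N)%N ->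
  (forall k, (m <= k)%N -> F k = 0) -> \sum_(k < N) F k = \sum_(k < m) F k.
Proof.
move=> mN H; rewrite (big_ord_widen N F mN) [LHS](bigID (fun k : 'I_N => (k < m)%N)) /=.
rewrite [X in _ + X = _]big1 ?addr0 // => k; rewrite -leqNgt; exact: H.
Qed.

Definition Sig (R : realType) (Phi : seq nat -> R) n := \sum_(k < n.+1) sumC n k Phi.

Lemma Sig_rec (R : realType) (Phi : seq nat -> R) n :
  Sig Phi n.+1 = \sum_(t < n.+1) Sig (fun l => Phi (t.+1 :: l)) (n - t).
Proof.
rewrite /Sig big_ord_recl /= add0r /=.
rewrite exchange_big /=; apply: eq_bigr => t _.
rewrite subSS; under eq_bigr do rewrite add0n.
rewrite (@sum_trunc R (fun k => sumC (n - t) k (fun l => Phi (t.+1 :: l))) (n - t).+1 n.+1) // => [|k kb]; first by rewrite ltnS leq_subr.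
by apply: sumC_big.
Qed.

Lemma Sig_ext (R : realType) (Phi1 Phi2 : seq nat -> R) n :
  (forall l, Phi1 l = Phi2 l) -> Sig Phi1 n = Sig Phi2 n.
Proof. by move=> H; apply: eq_bigr => k _; apply: sumC_ext. Qed.

Lemma Sig_add (R : realType) (Phi1 Phi2 : seq nat -> R) n :
  Sig (fun l => Phi1 l + Phi2 l) n = Sig Phi1 n + Sig Phi2 n.
Proof. by rewrite /Sig -big_split; apply: eq_bigr => k _; apply: sumC_add. Qed.

Lemma Sig_scale (R : realType) c (Phi : seq nat -> R) n :
  Sig (fun l => c * Phi l) n = c * Sig Phi n.
Proof. by rewrite /Sig mulr_sumr; apply: eq_bigr => k _; apply: sumC_scale. Qed.

Lemma Sig_ge0 (R : realType) (Phi : seq nat -> R) n :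
  (forall l, 0 <= Phi l) -> 0 <= Sig Phi n.
Proof. by move=> H; apply: sumr_ge0 => k _; apply: sumC_ge0. Qed.

Definition U (R : realType) (mu : nat -> R) n := Sig (Wl mu) n.
Definition Bs (R : realType) (mu : nat -> R) (P : pred nat) n :=
  Sig (fun l => Wl mu l * (count P l)%:R) n.

Lemma U0 (R : realType) (mu : nat -> R) : U mu 0 = 1.
Proof. by rewrite /U /Sig big_ord1 /= /Wl big_nil. Qed.

Lemma U_rec (R : realType) (mu : nat -> R) n :
  U mu n.+1 = \sum_(t < n.+1) mu t.+1 * U mu (n - t).
Proof.
rewrite /U Sig_rec; apply: eq_bigr => t _.
by rewrite -Sig_scale; apply: Sig_ext => l; rewrite /Wl big_cons.
Qed.

Lemma Bs0 (R : realType) (mu : nat -> R) P : Bs mu P 0 = 0.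
Proof. by rewrite /Bs /Sig big_ord1 /= mulr0. Qed.

Lemma Bs_rec (R : realType) (mu : nat -> R) P n :
  Bs mu P n.+1 = \sum_(t < n.+1)
     (mu t.+1 * (P t.+1)%:R * U mu (n - t) + mu t.+1 * Bs mu P (n - t)).
Proof.
rewrite /Bs Sig_rec; apply: eq_bigr => t _.
rewrite /U -!Sig_scale -Sig_add; apply: Sig_ext => l.
by rewrite /Wl big_cons /= natrD; ring.
Qed.

Lemma U_ge0 (R : realType) (mu : nat -> R) n : (forall s, 0 <= mu s) -> 0 <= U mu n.
Proof. by move=> H; apply: Sig_ge0 => l; apply: Wl_ge0. Qed.

Lemma Bs_ge0 (R : realType) (mu : nat -> R) P n : (forall s, 0 <= mu s) -> 0 <= Bs mu P n.
Proof. by move=> H; apply: Sig_ge0 => l; apply: mulr_ge0 => //; apply: Wl_ge0. Qed.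

Lemma sum_widen_le (R : realType) (F : nat -> R) N M : (N <= M)%N ->
  (forall j, (j < M)%N -> 0 <= F j) -> \sum_(j < N) F j <= \sum_(j < M) F j.
Proof.
move=> NM H; rewrite (big_ord_widen M F NM) [X in _ <= X](bigID (fun k : 'I_M => (k < N)%N)) /=.
by rewrite lerDl; apply: sumr_ge0 => j _; apply: H.
Qed.

Lemma sum_shift1 (R : realType) (mu : nat -> R) n :
  \sum_(t < n.+1) mu t = mu 0%N + \sum_(t < n) mu t.+1.
Proof. by rewrite big_ord_recl; congr (_ + _); apply: eq_bigr => i _; rewrite lift0. Qed.

Lemma U_le1 (R : realType) (mu : nat -> R) n : (forall s, 0 <= mu s) -> mu 0%N = 0 ->
  (forall j, \sum_(t < j) mu t <= 1) -> U mu n <= 1.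
Proof.
move=> mu_ge0 mu0 hS.
elim: n {-2}n (leqnn n) => [|n IH] m mn.
  by move: mn; rewrite leqn0 => /eqP ->; rewrite U0.
case: m mn => [|m] mn; first by rewrite U0.
rewrite U_rec; apply: (@le_trans _ _ (\sum_(t < m.+1) mu t.+1)).
  apply: ler_sum => t _; rewrite -[X in _ <= X]mulr1; apply: ler_wpM2l => //.
  by apply: IH; move: mn (ltn_ord t); clear; lia.
by have := hS m.+2; rewrite sum_shift1 mu0 add0r.
Qed.

Lemma U_mono (R : realType) (mu : nat -> R) n : (forall s, 0 <= mu s) ->
  mu 1%N * U mu n <= U mu n.+1.
Proof.
move=> mu_ge0; rewrite U_rec big_ord_recl /= subn0 lerDl.
by apply: sumr_ge0 => t _; apply: mulr_ge0 => //; apply: U_ge0.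
Qed.

Lemma U_pow (R : realType) (mu : nat -> R) i n : (forall s, 0 <= mu s) -> (i <= n)%N ->
  mu 1%N ^+ (n - i) * U mu i <= U mu n.
Proof.
move=> mu_ge0; elim: n => [|n IH] le_in.
  by move: le_in; rewrite leqn0 => /eqP ->; rewrite expr0 mul1r.
case: (ltngtP i n.+1) le_in => // [lt_in|->] _; last by rewrite subnn expr0 mul1r.
rewrite subSn // exprS -mulrA; apply: le_trans (U_mono _ mu_ge0).
by apply: ler_wpM2l => //; apply: IH.
Qed.

Definition T (R : realType) (mu : nat -> R) j := 1 - \sum_(t < j.+1) mu t.

Lemma renewal_id (R : realType) (mu : nat -> R) n : mu 0%N = 0 ->
  \sum_(i < n.+1) U mu i * T mu (n - i) = 1.
Proof.
move=> mu0; elim: n => [|n IH].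
  by rewrite big_ord1 U0 /T big_ord1 mu0 subr0 mul1r.
rewrite big_ord_recr /= subnn.
have -> : T mu 0 = 1 by rewrite /T big_ord1 mu0 subr0.
have E : forall i : 'I_n.+1, U mu i * T mu (n.+1 - i) =
    U mu i * T mu (n - i) - U mu i * mu (n.+1 - i)%N.
  move=> i; rewrite -mulrBr /T subSn; last by rewrite -ltnS.
  by rewrite big_ord_recr /= opprD addrA -subSn // -ltnS.
rewrite (eq_bigr _ (fun i _ => E i)) sumrB IH U_rec.
rewrite [X in 1 - X + _](reindex_inj rev_ord_inj) /=.
rewrite mulr1 [X in 1 - X + _ = _](eq_bigr (fun t : 'I_n.+1 => mu t.+1 * U mu (n - t))).
  by rewrite subrK.
move=> t _; rewrite subSS mulrC; congr (_ * _); congr (mu _).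
have := ltn_ord t; clear; lia.
Qed.

Definition Q (R : realType) (mu : nat -> R) (P : pred nat) m :=
  \sum_(t < m) mu t.+1 * (P t.+1)%:R.

Lemma Q_ge0 (R : realType) (mu : nat -> R) P m : (forall s, 0 <= mu s) -> 0 <= Q mu P m.
Proof. by move=> H; apply: sumr_ge0 => t _; apply: mulr_ge0. Qed.

Lemma Q_mono (R : realType) (mu : nat -> R) P m m' : (forall s, 0 <= mu s) -> (m <= m')%N ->
  Q mu P m <= Q mu P m'.
Proof.
move=> H mm; rewrite /Q; have := @sum_widen_le R (fun t => mu t.+1 * (P t.+1)%:R) m m' mm.
move=> h; apply h => j _; exact: mulr_ge0.
Qed.

Lemma Bs_le (R : realType) (mu : nat -> R) P n : (forall s, 0 <= mu s) -> mu 0%N = 0 ->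
  (forall j, \sum_(t < j) mu t <= 1) -> Bs mu P n <= n%:R * Q mu P n.
Proof.
move=> mu_ge0 mu0 hS.
elim: n {-2}n (leqnn n) => [|n IH] m mn.
  by move: mn; rewrite leqn0 => /eqP ->; rewrite Bs0 mul0r.
case: m mn => [|m] mn; first by rewrite Bs0 mul0r.
have hmu : \sum_(t < m.+1) mu t.+1 <= 1.
  by have := hS m.+2; rewrite sum_shift1 mu0 add0r.
have Q0 := Q_ge0 P m.+1 mu_ge0.
rewrite Bs_rec big_split /=.
have h1 : \sum_(t < m.+1) mu t.+1 * (P t.+1)%:R * U mu (m - t) <= Q mu P m.+1.
  apply: ler_sum => t _; rewrite -[X in _ <= X]mulr1; apply: ler_wpM2l.
    exact: mulr_ge0.
  exact: U_le1.
have h2 : \sum_(t < m.+1) mu t.+1 * Bs mu P (m - t) <= m%:R * Q mu P m.+1.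
  apply: (@le_trans _ _ (\sum_(t < m.+1) mu t.+1 * (m%:R * Q mu P m.+1))).
    apply: ler_sum => t _; apply: ler_wpM2l => //.
    apply: (le_trans (IH (m - t)%N _)); first by move: mn; clear; lia.
    apply: ler_pM => //; first exact: Q_ge0.
      by rewrite ler_nat; move: mn; clear; lia.
    by apply: Q_mono => //; clear; lia.
  rewrite -mulr_suml -[X in _ <= X]mul1r; apply: ler_wpM2r => //.
  exact: mulr_ge0.
apply: (le_trans (lerD h1 h2)).
by rewrite -[(m.+1)%:R]natr1; rewrite mulrDl mul1r addrC.
Qed.

Lemma ev_nat (P : nat -> Prop) : (\forall n \near \oo, P n) -> exists N, forall n, (N <= n)%N -> P n.
Proof. move=> [N _ HN]. exists N => n hn. exact: HN. Qed.

Lemma series_ord (R : realType) (f : nat -> R) n : series f n = \sum_(t < n) f t.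
Proof. by rewrite /series /= big_mkord. Qed.

Lemma series_nondec (R : realType) (f : nat -> R) : (forall s, 0 <= f s) ->
  {homo series f : n m / (n <= m)%N >-> n <= m}.
Proof.
move=> H n m nm; rewrite !series_ord.
by have := @sum_widen_le R f n m nm; move=> h; apply h => j _.
Qed.

Lemma partial_le (R : realType) (f : nat -> R) (l : R) : (forall s, 0 <= f s) ->
  series f @ \oo --> l -> forall j, \sum_(t < j) f t <= l.
Proof.
move=> H hl j; rewrite -series_ord.
have := nondecreasing_cvgn_le (series_nondec H) (cvgP _ hl) j.
by rewrite (cvg_lim _ hl).
Qed.

Lemma tail_small (R : realType) (f : nat -> R) (l : R) d : (forall s, 0 <= f s) -> 0 < d ->
  series f @ \oo --> l -> exists N, l - \sum_(t < N) f t < d.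
Proof.
move=> H d0 hl; move/cvgrPdist_lt: hl => /(_ d d0) /ev_nat [N HN].
exists N; have := HN N (leqnn N); rewrite -series_ord.
by move/(le_lt_trans (ler_norm _)).
Qed.

Lemma cnt_lt m J : (\sum_(j < m) nat_of_bool (j < J)%N)%N = minn m J.
Proof.
elim: m => [|m IH]; first by rewrite big_ord0 min0n.
rewrite big_ord_recr /= IH; case: (ltnP m J) => h; lia.
Qed.

Lemma cnt_ge m J : (\sum_(j < m) nat_of_bool (J <= j)%N)%N = (m - J)%N.
Proof.
elim: m => [|m IH]; first by rewrite big_ord0.
rewrite big_ord_recr /= IH; case: (leqP J m) => h; lia.
Qed.

Lemma Elem (R : realType) (mu : nat -> R) J M : (forall s, 0 <= mu s) ->
  \sum_(j < M) (nat_of_bool (J <= j)%N)%:R *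
      (\sum_(t < M.+1) mu t - \sum_(t < j.+1) mu t)
  <= \sum_(j < M) (nat_of_bool (J <= j)%N)%:R * ((j.+1)%:R * mu j.+1).
Proof.
move=> mu_ge0; elim: M => [|M IH]; first by rewrite !big_ord0.
rewrite big_ord_recr [X in _ <= X]big_ord_recr /=.
have SM : \sum_(t < M.+2) mu t = \sum_(t < M.+1) mu t + mu M.+1 by rewrite big_ord_recr.
rewrite SM.
have E1 : \sum_(j < M) (nat_of_bool (J <= j)%N)%:R *
       (\sum_(t < M.+1) mu t + mu M.+1 - \sum_(t < j.+1) mu t)
   = \sum_(j < M) (nat_of_bool (J <= j)%N)%:R *
       (\sum_(t < M.+1) mu t - \sum_(t < j.+1) mu t) + (M - J)%N%:R * mu M.+1.
  rewrite -cnt_ge natr_sum mulr_suml -big_split /=; apply: eq_bigr => j _; ring.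
rewrite E1 -addrA; apply: lerD => //.
have -> : \sum_(t < M.+1) mu t + mu M.+1 - \sum_(t < M.+1) mu t = mu M.+1.
  by rewrite addrC addKr.
rewrite mulrA -mulrDl; apply: ler_wpM2r => //.
by rewrite -natrD -natrM ler_nat; case: leqP => h /=; lia.
Qed.

Lemma shift_G (R : realType) (mu : nat -> R) J M :
  (forall s, 0 <= mu s) ->
  \sum_(j < M) (nat_of_bool (J <= j)%N)%:R * ((j.+1)%:R * mu j.+1)
  <= \sum_(t < M.+1) (nat_of_bool (J <= t)%N)%:R * (t%:R * mu t).
Proof.
move=> mu_ge0; rewrite big_ord_recl /= mul0r mulr0 add0r.
apply: ler_sum => j _; rewrite /bump /= add1n; apply: ler_wpM2r.
  by apply: mulr_ge0.
by rewrite ler_nat; case: (leqP J j) => h; case: (leqP J j.+1) => h' //=; lia.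
Qed.

Lemma Smono (R : realType) (mu : nat -> R) j M : (forall s, 0 <= mu s) -> (j <= M)%N ->
  \sum_(t < j) mu t <= \sum_(t < M) mu t.
Proof. by move=> H jM; have := @sum_widen_le R mu j M jM; move=> h; apply h => i _. Qed.

Lemma tailT (R : realType) (mu : nat -> R) J :
  (forall s, 0 <= mu s) -> series mu @ \oo --> (1 : R) ->
  (forall K, \sum_(t < K) (nat_of_bool (J <= t)%N)%:R * (t%:R * mu t) <= 4^-1) ->
  forall n, \sum_(j < n.+1) (nat_of_bool (J <= j)%N)%:R * T mu j <= 2^-1.
Proof.
move=> mu_ge0 mu_prob hJ n.
have hS := partial_le mu_ge0 mu_prob.
set d : R := (4 * (n.+1)%:R)^-1.
have d0 : 0 < d by rewrite invr_gt0 mulr_gt0 // ltr0n.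
have := mu_prob; move/cvgrPdist_lt => /(_ d d0) /ev_nat [N' HN'].
set M := (N' + n.+1)%N.
have := HN' M.+1 ltac:(rewrite /M; lia); rewrite series_ord => hM.
set SM := \sum_(t < M.+1) mu t.
have SM1 : SM <= 1 by apply: hS.
have hd : (n.+1)%:R * (1 - SM) <= 4^-1.
  have h1 : 1 - SM <= d by apply: ltW; apply: le_lt_trans (ler_norm _) hM.
  apply: (le_trans (ler_wpM2l _ h1)) => //.
  rewrite /d invfM mulrCA mulfV ?mulr1 // pnatr_eq0 //.
have E : forall j : 'I_n.+1, (nat_of_bool (J <= j)%N)%:R * T mu j =
   (nat_of_bool (J <= j)%N)%:R * (SM - \sum_(t < j.+1) mu t)
   + (nat_of_bool (J <= j)%N)%:R * (1 - SM).
  by move=> j; rewrite /T; ring.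
rewrite (eq_bigr _ (fun j _ => E j)) big_split /=.
have h1 : \sum_(j < n.+1) (nat_of_bool (J <= j)%N)%:R * (SM - \sum_(t < j.+1) mu t) <= 4^-1.
  apply: (@le_trans _ _ (\sum_(j < M) (nat_of_bool (J <= j)%N)%:R * (SM - \sum_(t < j.+1) mu t))).
    have := @sum_widen_le R (fun j => (nat_of_bool (J <= j)%N)%:R * (SM - \sum_(t < j.+1) mu t)) n.+1 M ltac:(rewrite /M; lia).
    move=> h; apply h => j jM; apply: mulr_ge0 => //.
    by rewrite subr_ge0; apply: Smono => //; rewrite /M; lia.
  apply: (le_trans (Elem J M mu_ge0)); apply: (le_trans (shift_G J M mu_ge0)).
  exact: hJ.
have h2 : \sum_(j < n.+1) (nat_of_bool (J <= j)%N)%:R * (1 - SM) <= 4^-1.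
  apply: le_trans hd.
  apply: (@le_trans _ _ (\sum_(j < n.+1) (1 - SM))).
    apply: ler_sum => j _; rewrite -[X in _ <= X]mul1r; apply: ler_wpM2r.
      by rewrite subr_ge0.
    by case: (J <= j)%N.
  by rewrite sumr_const card_ord mulr_natl.
apply: (le_trans (lerD h1 h2)); lra.
Qed.

Lemma U_lb (R : realType) (mu : nat -> R) J :
  (forall s, 0 <= mu s) -> mu 0%N = 0 -> series mu @ \oo --> (1 : R) -> (0 < J)%N ->
  (forall n, \sum_(j < n.+1) (nat_of_bool (J <= j)%N)%:R * T mu j <= 2^-1) ->
  forall n, mu 1%N ^+ J / (2 * J%:R) <= U mu n.
Proof.
move=> mu_ge0 mu0 mu_prob J0 hT n.
have hS := partial_le mu_ge0 mu_prob.
have T0 : forall j, 0 <= T mu j by move=> j; rewrite /T subr_ge0.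
have T1 : forall j, T mu j <= 1.
  by move=> j; rewrite /T lerBlDr lerDl; apply: sumr_ge0.
have m1 : mu 1%N <= 1 by have := hS 2%N; rewrite big_ord_recr big_ord1 /= mu0 add0r.
have Ule1 : forall m, U mu m <= 1 by move=> m; apply: U_le1.
have R1 := renewal_id n mu0.
rewrite (reindex_inj rev_ord_inj) /= in R1.
have E : forall j : 'I_n.+1, U mu (n.+1 - j.+1) * T mu (n - (n.+1 - j.+1)) =
  (nat_of_bool (j < J)%N)%:R * (U mu (n - j) * T mu j) +
  (nat_of_bool (J <= j)%N)%:R * (U mu (n - j) * T mu j).
  move=> j; rewrite subSS.
  have -> : (n - (n - j) = j)%N by have := ltn_ord j; lia.
  by case: (ltnP j J) => _ /=; rewrite ?mul1r ?mul0r ?addr0 ?add0r.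
rewrite (eq_bigr _ (fun j _ => E j)) big_split /= in R1.
set A := \sum_(j < n.+1) _ in R1.
set B := \sum_(j < n.+1) _ in R1.
have hB : B <= 2^-1.
  apply: le_trans (hT n); apply: ler_sum => j _; apply: ler_wpM2l => //.
  by rewrite -[X in _ <= X]mul1r; apply: ler_wpM2r.
have hA : mu 1%N ^+ J * A <= J%:R * U mu n.
  rewrite /A mulr_sumr.
  apply: (@le_trans _ _ (\sum_(j < n.+1) (nat_of_bool (j < J)%N)%:R * U mu n)).
    apply: ler_sum => j _; case: (ltnP j J) => hj /=; last by rewrite !mul0r mulr0.
    rewrite !mul1r.
    apply: (@le_trans _ _ (mu 1%N ^+ j * U mu (n - j))).
      apply: (@le_trans _ _ (mu 1%N ^+ J * U mu (n - j))).
        apply: ler_wpM2l; first exact: exprn_ge0.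
        by rewrite -[X in _ <= X]mulr1; apply: ler_wpM2l => //; apply: U_ge0.
      apply: ler_wpM2r; first exact: U_ge0.
      by apply: ler_wiXn2l => //; apply: ltnW.
    have := @U_pow R mu (n - j)%N n mu_ge0 (leq_subr _ _).
    by have -> : (n - (n - j) = j)%N by have := ltn_ord j; lia.
  rewrite -mulr_suml -natr_sum cnt_lt; apply: ler_wpM2r; first exact: U_ge0.
  by rewrite ler_nat geq_minr.
have pJ : 0 <= mu 1%N ^+ J by apply: exprn_ge0.
have J0' : 0 < (J%:R : R) by rewrite ltr0n.
have key : mu 1%N ^+ J <= 2 * (J%:R * U mu n).
  have : mu 1%N ^+ J * (A + B) <= J%:R * U mu n + mu 1%N ^+ J * 2^-1.
    by rewrite mulrDr; apply: lerD => //; apply: ler_wpM2l.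
  rewrite R1 mulr1; lra.
rewrite ler_pdivrMr; last by rewrite mulr_gt0.
by have -> : U mu n * (2 * J%:R) = 2 * (J%:R * U mu n) by ring.
Qed.

Lemma Gtail (R : realType) (f : nat -> R) (L : R) N K : (forall s, 0 <= f s) ->
  series f @ \oo --> L ->
  \sum_(t < K) (nat_of_bool (N <= t)%N)%:R * f t <= L - \sum_(t < N) f t.
Proof.
move=> f0 hL.
have hle := partial_le f0 hL.
apply: (@le_trans _ _ (\sum_(t < N + K) (nat_of_bool (N <= t)%N)%:R * f t)).
  have := @sum_widen_le R (fun t => (nat_of_bool (N <= t)%N)%:R * f t) K (N + K) (leq_addl _ _).
  by move=> h; apply h => j _; apply: mulr_ge0.
have E : \sum_(t < N) f t = \sum_(t < N + K) (nat_of_bool (t < N)%N)%:R * f t.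
  rewrite (big_ord_widen (N + K) f (leq_addr _ _)) big_mkcond /=.
  by apply: eq_bigr => t _; case: (t < N)%N; rewrite ?mul1r ?mul0r.
have E2 : \sum_(t < N + K) f t = \sum_(t < N + K) (nat_of_bool (t < N)%N)%:R * f t
   + \sum_(t < N + K) (nat_of_bool (N <= t)%N)%:R * f t.
  rewrite -big_split /=; apply: eq_bigr => t _.
  by case: (ltnP t N) => _ /=; rewrite ?mul1r ?mul0r ?addr0 ?add0r.
rewrite lerBrDl E -E2; exact: hle.
Qed.

Lemma shiftF (R : realType) (f : nat -> R) N n : f 0%N = 0 ->
  \sum_(t < n) (nat_of_bool (N <= t.+1)%N)%:R * f t.+1 =
  \sum_(t < n.+1) (nat_of_bool (N <= t)%N)%:R * f t.
Proof.
move=> f0; rewrite big_ord_recl /= f0 mulr0 add0r.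
by apply: eq_bigr => t _; rewrite /bump /= add1n.
Qed.

Unset Implicit Arguments.
Set Strict Implicit.

Theorem theorem3 (R : realType) (mu : nat -> R)
  (mu_ge0 : forall s, 0 <= mu s)
  (mu0 : mu 0%N = 0)
  (mu_prob : series mu @ \oo --> (1 : R))
  (mu1 : 0 < mu 1%N)
  (mu_mean : cvg (series (fun s => s%:R * mu s) @ \oo)) :
  forall eps : R, 0 < eps ->
    (fun n : nat =>
       esc_prob mu n (fun P => eps < (max_block P)%:R / n%:R)) @ \oo --> (0 : R).
Proof.
move=> eps eps0.
have hS := partial_le mu_ge0 mu_prob.
set f := fun s : nat => s%:R * mu s.
have f_ge0 : forall s, 0 <= f s by move=> s; apply: mulr_ge0.
set L := lim (series f @ \oo).
have hL : series f @ \oo --> L by exact: mu_mean.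
have h4 : 0 < (4^-1 : R) by rewrite invr_gt0.
have [N0 hN0] := tail_small f_ge0 h4 hL.
set J := N0.+1.
have hJ : forall K, \sum_(t < K) (nat_of_bool (J <= t)%N)%:R * (t%:R * mu t) <= 4^-1.
  move=> K; apply: ltW; apply: le_lt_trans _ _; last first.
    exact: hN0.
  apply: (@le_trans _ _ (\sum_(t < K) (nat_of_bool (N0 <= t)%N)%:R * f t)); last first.
    exact: Gtail.
  apply: ler_sum => t _; apply: ler_wpM2r; first exact: f_ge0.
  by rewrite ler_nat; case: (leqP J t) => h; case: (leqP N0 t) => h' //=; lia.
have hT := tailT mu_ge0 mu_prob hJ.
set c := mu 1%N ^+ J / (2 * J%:R).
have c0 : 0 < c by rewrite /c divr_gt0 ?exprn_gt0 // mulr_gt0 // ltr0n.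
have hc : forall n, c <= U mu n by move=> n; apply: U_lb.
apply/cvgrPdist_lt => d d0.
have d'0 : 0 < d * eps * c by apply: mulr_gt0 => //; apply: mulr_gt0.
have [N1 hN1] := tail_small f_ge0 d'0 hL.
have ev := nbhs_infty_ger (N1%:R / eps).
near=> n.
have hn : N1%:R / eps <= n%:R by near: n.
set P := (fun t : nat => eps * n%:R < t%:R).
have Un0 : 0 < U mu n by apply: lt_le_trans (hc n).
have esc0 : 0 <= esc_prob mu n (fun P => eps < (max_block P)%:R / n%:R).
  apply: mulr_ge0; last by rewrite invr_ge0 probE_eq; apply: ltW.
  apply: sumr_ge0 => k _; apply: sumr_ge0 => s _; apply: mulr_ge0.
    by rewrite weight_lst; apply: Wl_ge0.
  by apply: divr_ge0.
have esc1 := esc_le n mu_ge0 eps0.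
have EP : prob_E mu n = U mu n by rewrite probE_eq.
rewrite EP in esc1.
rewrite -/P -/(Bs mu P n) in esc1.
rewrite sub0r normrN ger0_norm //.
apply: (le_lt_trans esc1).
have B0 : 0 <= Bs mu P n by apply: Bs_ge0.
apply: (@le_lt_trans _ _ (Bs mu P n / c)).
  apply: ler_wpM2l => //; rewrite lef_pV2 ?posrE //.
have hQ : n%:R * Q mu P n <= eps^-1 * (L - \sum_(t < N1) f t).
  rewrite /Q mulr_sumr.
  apply: (@le_trans _ _ (\sum_(t < n) eps^-1 * ((nat_of_bool (N1 <= t.+1)%N)%:R * f t.+1))).
    apply: ler_sum => t _; rewrite /P.
    case: ltrP => h /=; last first.
      rewrite !mulr0; apply: mulr_ge0; first by rewrite invr_ge0 ltW.
      exact: mulr_ge0.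
    have hN : (N1 <= t.+1)%N.
      rewrite -(ler_nat R); apply: ltW; apply: le_lt_trans h.
      by rewrite mulrC -ler_pdivrMr.
    rewrite hN /= !mul1r mulr1 /f mulrA; apply: ler_wpM2r => //.
    by rewrite mulrC ler_pdivlMr // mulrC ltW.
  rewrite -mulr_sumr shiftF /f ?mul0r //; apply: ler_wpM2l; first by rewrite invr_ge0 ltW.
  exact: (Gtail N1 n.+1 f_ge0 hL).
apply: (@le_lt_trans _ _ ((eps^-1 * (L - \sum_(t < N1) f t)) / c)).
  apply: ler_wpM2r; first by rewrite invr_ge0 ltW.
  by apply: le_trans (Bs_le P n mu_ge0 mu0 hS) hQ.
rewrite ltr_pdivrMr // mulrC ltr_pdivrMr //.
by apply: lt_le_trans hN1 _; rewrite mulrAC.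
Unshelve. all: end_near.
Qed.
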